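(* For even $m\ge 18$, let $G^{\mathrm{dist}}_m$ be the graph with vertex set $\{u^*\}\cup A\cup\{z_1,z_2,x,y\}\cup L$, where $A=\{a_1,a_2,a_3,a_4\}$ induces a $K_4$, $|L|=m-15$, $u^*$ is adjacent to every vertex of $A\cup\{z_1,z_2\}\cup L$, and the remaining edges are exactly $z_1x$, $z_2y$, $xy$ (so $G^{\mathrm{dist}}_m$ has $m$ edges). Its spectral radius equals the largest root of \[ f_{\mathrm{dist}}(x)=x^5-4x^4+(11-m)x^3+(4m-45)x^2+(28-2m)x+45-3m, \] and $\rho(G^{\mathrm{dist}}_m)<\rho'(m)$.
   Context: $\rho(G)$ denotes the adjacency spectral radius. For even $m$, $\rho'(m)$ is the largest real root of $p_m(x)=x^4-mx^2-(m-2)x+\frac{m}{2}-1$. *)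

(* Defs.v *)
From HB Require Import structures.
From mathcomp Require Import all_boot all_order all_algebra.
Set Implicit Arguments. Unset Strict Implicit. Unset Printing Implicit Defensive.
Import Order.TTheory GRing.Theory Num.Theory.
Local Open Scope ring_scope.

Definition adjmx (R : nzRingType) (n : nat) (e : rel 'I_n) : 'M[R]_n :=
  \matrix_(i, j) (e i j)%:R.

(* For the real symmetric adjacency matrix all eigenvalues are real. *)
Definition is_spectral_radius (R : rcfType) (n : nat) (A : 'M[R]_n) (r : R) :=
  (exists2 l, root (char_poly A) l & `|l| = r) /\
  (forall l, root (char_poly A) l -> `|l| <= r).

Definition is_largest_root (R : rcfType) (p : {poly R}) (r : R) :=
  root p r /\ (forall x, root p x -> x <= r).

(* p_m(x) = x^4 - m x^2 - (m-2) x + m/2 - 1 ; rho'(m) is its largest real root *)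
Definition p_poly (R : rcfType) (m : nat) : {poly R} :=
  'X^4 - (m%:R)%:P * 'X^2 - (m%:R - 2)%:P * 'X + (m%:R / 2 - 1)%:P.

Definition f_dist (R : rcfType) (m : nat) : {poly R} :=
  'X^5 - 4%:P * 'X^4 + (11 - m%:R)%:P * 'X^3 + (4 * m%:R - 45)%:P * 'X^2
  + (28 - 2 * m%:R)%:P * 'X + (45 - 3 * m%:R)%:P.

(* The graph G^dist_m on vertex set 'I_(m-6), labelled:
   0 = u*, 1..4 = A = {a1..a4}, 5 = z1, 6 = z2, 7 = x, 8 = y,
   9..m-7 = L (so |L| = m-15). *)
Definition dist_edge0 (i j : nat) : bool :=
  [|| (i == 0%N) && ((1 <= j <= 6)%N || (9 <= j)%N),
      [&& (1 <= i <= 4)%N, (1 <= j <= 4)%N & i != j],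
      (i == 5%N) && (j == 7%N),
      (i == 6%N) && (j == 8%N) |
      (i == 7%N) && (j == 8%N)].

Definition Gdist (m : nat) : rel 'I_(m - 6) :=
  fun i j => dist_edge0 i j || dist_edge0 j i.

(* Main.v *)
From mathcomp Require Import all_boot all_order all_algebra.
From mathcomp Require Import ring lra zify.
From Stdlib Require Import Classical.
Require Import Defs.
Import Order.TTheory GRing.Theory Num.Theory.
Local Open Scope ring_scope.

Lemma fh (R : rcfType) m (t : R) : (f_dist R m).[t] =
  t^+5 - 4* t^+4 + (11 - m%:R)* t^+3 + (4 * m%:R - 45)* t^+2 + (28 - 2* m%:R)* t + (45 - 3* m%:R).
Proof. rewrite /f_dist. rewrite !(hornerD, hornerN, hornerCM, hornerXn, hornerX, hornerC). by []. Qed.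
Lemma ph (R : rcfType) m (t : R) : (p_poly R m).[t] =
  t^+4 - m%:R * t^+2 - (m%:R - 2) * t + (m%:R / 2 - 1).
Proof. rewrite /p_poly. rewrite !(hornerD, hornerN, hornerCM, hornerXn, hornerX, hornerC). by []. Qed.

Definition E (i j : nat) := dist_edge0 i j || dist_edge0 j i.

Lemma E_tail i k : E i k.+4.+4.+1 = (i == 0)%N.
Proof. by do 9 (case: i => [|i] //). Qed.
Lemma E_tail' i k : E k.+4.+4.+1 i = (i == 0)%N.
Proof. by rewrite /E orbC -(E_tail i k). Qed.

Definition wf {R : rcfType} (m : nat) (t : R) (k : nat) : R :=
  match k with
  | 0 => t * (t - 3) * (t ^+ 2 - t - 1)
  | 1 | 2 | 3 | 4 => t * (t ^+ 2 - t - 1)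
  | 5 | 6 => t * (t - 3) * (t - 1)
  | 7 | 8 => t * (t - 3)
  | _ => (t - 3) * (t ^+ 2 - t - 1)
  end.

Definition W {R : rcfType} m (t : R) : 'rV[R]_(m - 6) := \row_(j < m - 6) wf m t j.

Lemma W_eig (R : rcfType) m (t : R) : (18 <= m)%N -> root (f_dist R m) t ->
  W m t *m adjmx R (@Gdist m) = t *: W m t.
Proof.
move=> m18 ft.
have hk : ((m - 6 - 9)%N%:R : R) = m%:R - 15.
  rewrite -subnDA natrB //; lia.
move: ft; rewrite /root fh => /eqP ft.
apply/rowP => j; rewrite !mxE.
under eq_bigr do rewrite !mxE.
rewrite -(big_mkord xpredT (fun i => wf m t i * (E i j)%:R)).
rewrite (big_cat_nat _ (n:=9)) //=; last lia.
rewrite [X in _ + X](eq_big_nat _ _ (F2 := fun _ => (t - 3) * (t ^+ 2 - t - 1) * ((j : nat) == 0%N)%:R)); last first.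
  move=> i /andP [i9 _]; have -> : i = (i - 9)%N.+4.+4.+1 by lia.
  by rewrite E_tail'.
rewrite sumr_const_nat.
rewrite big_nat !big_cons big_nil/=.
case: j => /= jn _.
have [jlt|jge] := ltnP jn 9.
  case: jn jlt => [|jn] jlt.
 rewrite /E /= -[_ *+ (m - 6 - 9)]mulr_natr hk. lra.
  do 8 (case: jn jlt => [|jn] jlt; first by rewrite /E /=; ring).
  by [].
have -> : jn = (jn - 9)%N.+4.+4.+1 by lia.
rewrite !E_tail /=.
ring.
Qed.
Lemma largest_root (R: rcfType) (p : {poly R}) r : p != 0 -> root p r ->
  exists x, root p x /\ (forall y, root p y -> y <= x).
Proof.
move=> p0 pr; apply: NNPP => H.
have nx x : root p x -> exists y, root p y /\ x < y.
  move=> px; apply: NNPP => H2; apply: H; exists x; split => // y py.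
  rewrite leNgt; apply/negP => xy; apply: H2; by exists y.
have cl k : exists x s, [/\ root p x, size s = k, uniq s, all (root p) s & all (fun z => z < x) s].
  elim: k => [|k [x [s [px sz us rs ls]]]]; first by exists r, [::].
  have [y [py xy]] := nx x px.
  exists y, (x :: s); split => //=; first by rewrite sz.
  - rewrite us andbT; apply/negP => xs.
    by move/allP: ls => /(_ _ xs); rewrite ltxx.
  - by rewrite px.
  - rewrite xy /=; apply/allP => z zs; move/allP: ls => /(_ _ zs) zx.
    exact: lt_trans zx xy.
have [x [s [_ sz us rs _]]] := cl (size p).
by have := max_poly_roots p0 rs us; rewrite sz ltnn.
Qed.
Lemma cw (R : rcfType) n (A : 'M[R]_n) (w : 'rV_n) t :
 (forall i j, 0 <= A i j) -> (forall i, 0 < w 0 i) -> w *m A = t *: w ->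
 forall l, root (char_poly A) l -> `|l| <= t.
Proof.
move=> A0 w0 wA l; rewrite -eigenvalue_root_char => /eigenvalueP [v vA vn0].
have [i0 vi0] : exists i, v 0 i != 0.
  apply/existsP; apply: contraR vn0 => /existsPn H; apply/eqP/rowP => i.
  by rewrite mxE; apply/eqP; rewrite -[_ == _]negbK H.
pose F i := `|v 0 i| / w 0 i.
have [j _ Hj] := arg_maxP F (isT : predT i0).
have wj := w0 j.
have kpos : 0 < F j.
  apply: lt_le_trans (Hj i0 isT); rewrite /F divr_gt0 ?normr_gt0 //.
have vle i : `|v 0 i| <= F j * w 0 i by rewrite -ler_pdivrMr ?w0 //; apply: Hj.
have vj0 : 0 < `|v 0 j| by move: kpos; rewrite /F pmulr_lgt0 ?invr_gt0.
have e1 : l * v 0 j = \sum_i v 0 i * A i j.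
  by have := congr1 (fun M : 'M[R]_(1,n) => M 0 j) vA; rewrite !mxE => <-.
have e2 : t * w 0 j = \sum_i w 0 i * A i j.
  by have := congr1 (fun M : 'M[R]_(1,n) => M 0 j) wA; rewrite !mxE => <-.
have : `|l| * `|v 0 j| <= t * `|v 0 j|.
  rewrite -normrM e1 (le_trans (ler_norm_sum _ _ _)) //.
  apply: (@le_trans _ _ (\sum_i F j * (w 0 i * A i j))).
    apply: ler_sum => i _; rewrite normrM (ger0_norm (A0 _ _)) mulrA.
    by apply: ler_wpM2r => //.
  rewrite -mulr_sumr -e2 mulrCA.
  by rewrite /F mulfVK ?gt_eqF // [t * _]mulrC.
by rewrite ler_pM2r.
Qed.

Lemma wf_pos (R : rcfType) m (t : R) k : 3 < t -> 0 < wf m t k.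
Proof.
move=> t3.
have ht : 0 < t by lra.
have h3 : 0 < t - 3 by lra.
have h1 : 0 < t - 1 by lra.
have hq : 0 < t ^+ 2 - t - 1 by nra.
by do 9 (case: k => [|k]; first by rewrite /wf ?mulr_gt0); rewrite /wf ?mulr_gt0.
Qed.

Lemma W_neq0 (R : rcfType) m (x : R) : (18 <= m)%N -> W m x != 0.
Proof.
move=> m18; apply/eqP => H.
have e k (hk : (k < m - 6)%N) : wf m x k = 0.
  by have := congr1 (fun M : 'rV[R]_(m - 6) => M 0 (Ordinal hk)) H; rewrite !mxE.
have e1 := e 1%N ltac:(lia). have e7 := e 7%N ltac:(lia). have e9 := e 9%N ltac:(lia).
rewrite /wf in e1 e7 e9.
have q0 : x ^+ 2 - x - 1 = 0.
  have : 3 * (x ^+ 2 - x - 1) = 0.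
    have -> : 3 * (x ^+ 2 - x - 1) = x * (x ^+ 2 - x - 1) - (x - 3) * (x ^+ 2 - x - 1) by ring.
    by rewrite e1 e9 subr0.
  by move/eqP; rewrite mulf_eq0 (negbTE (lt0r_neq0 _)) //= => /eqP.
clear H e.
have hx : x = 1 / 2 by lra.
move: q0; rewrite hx; lra.
Qed.

Theorem proposition6p3 (R : rcfType) (m : nat) :
  ~~ odd m -> (18 <= m)%N ->
  exists rho : R,
    [/\ is_spectral_radius (adjmx R (@Gdist m)) rho,
        is_largest_root (f_dist R m) rho &
        exists2 rho' : R, is_largest_root (p_poly R m) rho' & rho < rho'].
Proof.
move=> _ m18.
have hm : (18 : R) <= m%:R by rewrite (ler_nat R 18 m).
set M : R := m%:R in hm *.
have fc : (f_dist R m).[21/5] <= 0 by rewrite fh; lra.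
have fM : 0 <= (f_dist R m).[M].
  rewrite fh.
  have h1 : 0 <= M ^+ 4 * (M - 5) by apply: mulr_ge0; [exact: exprn_ge0; lra | lra].
  have h2 : 0 <= M ^+ 2 * (15 * M - 47) by apply: mulr_ge0; [exact: exprn_ge0; lra | lra].
  have -> : M ^+ 5 - 4 * M ^+ 4 + (11 - M) * M ^+ 3 + (4 * M - 45) * M ^+ 2
     + (28 - 2 * M) * M + (45 - 3 * M) =
     M ^+ 4 * (M - 5) + M ^+ 2 * (15 * M - 47) + (25 * M + 45) by ring.
  lra.
have [t0 /andP [t0c t0M] ft0] := @poly_ivt R (f_dist R m) (21/5) M ltac:(lra) ltac:(by rewrite fc fM).
have t03 : 3 < t0 by lra.
have A0 : forall i j, 0 <= adjmx R (@Gdist m) i j by move=> i j; rewrite mxE ler0n.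
have w0 : forall i, 0 < W m t0 0 i by move=> i; rewrite mxE; apply: wf_pos.
have bound := @cw R _ _ _ _ A0 w0 (@W_eig R m t0 m18 ft0).
have eig x : root (f_dist R m) x -> root (char_poly (adjmx R (@Gdist m))) x.
  move=> fx; rewrite -eigenvalue_root_char; apply/eigenvalueP.
  by exists (W m x); [exact: W_eig | exact: W_neq0].
exists t0; split.
- split; last exact: bound.
  by exists t0; [exact: eig | rewrite ger0_norm //; lra].
- split => // x fx; apply: le_trans (bound _ (eig _ fx)); exact: ler_norm.
have pt0 : (p_poly R m).[t0] < 0.
  move: ft0; rewrite /root fh ph => /eqP ft0.
  rewrite -/M in ft0 *.
  set t := t0 in ft0 t0c t03 *.
  have hD : 0 < (t - 3) * (t ^+ 2 - t - 1) by apply: mulr_gt0; nra.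
  rewrite -(pmulr_rlt0 _ hD).
  set s := t - 4.
  have s0 : 1/5 <= s by rewrite /s; lra.
  have -> : (t - 3) * (t ^+ 2 - t - 1) * (t ^+ 4 - M * t ^+ 2 - (M - 2) * t + (M / 2 - 1))
     = - (-287 + 5022 * s + 6187 * s ^+ 2 + 2789 * s ^+ 3
          + 586 * s ^+ 4 + 57 * s ^+ 5 + 2 * s ^+ 6) / 2
       + (t ^+ 2 + t - 1/2) * (t ^+ 5 - 4 * t ^+ 4 + (11 - M) * t ^+ 3 + (4 * M - 45) * t ^+ 2
          + (28 - 2 * M) * t + (45 - 3 * M)).
    by rewrite /s; field.
  rewrite ft0 mulr0 addr0.
  have s00 : 0 <= s by lra.
  have : 0 <= 6187 * s ^+ 2 + 2789 * s ^+ 3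
          + 586 * s ^+ 4 + 57 * s ^+ 5 + 2 * s ^+ 6.
    by rewrite !addr_ge0 // mulr_ge0 // exprn_ge0.
  lra.
have pM : 0 <= (p_poly R m).[M].
  rewrite ph.
  have h1 : 0 <= M ^+ 3 * (M - 1) by apply: mulr_ge0; [exact: exprn_ge0; lra | lra].
  have h2 : 0 <= M * (M - 1) by apply: mulr_ge0; lra.
  have -> : M ^+ 4 - M * M ^+ 2 - (M - 2) * M + (M / 2 - 1) =
     M ^+ 3 * (M - 1) - M * (M - 1) + (5/2 * M - 1) - M by field.
  nra.
have [r /andP [rt rM] pr] := @poly_ivt R (p_poly R m) t0 M t0M ltac:(by rewrite pM ltW).
have p0 : p_poly R m != 0.
  by apply/eqP => p0; move: pt0; rewrite p0 horner0 ltxx.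
have [rho' [prho' Hrho']] := @largest_root _ _ _ p0 pr.
exists rho'; first by split.
apply: lt_le_trans (Hrho' _ pr).
rewrite lt_neqAle rt andbT; apply/eqP => e.
by move: pr; rewrite /root -e => /eqP h; move: pt0; rewrite h ltxx.
Qed.
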